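(* Let $\alpha>0$ and let $(\omega_k)_{k\ge0}$ be the sequence defined below, satisfying the tie-breaking convention. Suppose there is $n\in\mathbb{N}$ such that $y(\omega_k)=y(\omega)$ for all $k<n$ and $y(\omega_n)\neq y(\omega)$. Then $f(y(\omega_n))<f(y(\omega))$.
   Context: Let $Y\subset\mathbb{R}^n$ be a finite non-empty set. For $\omega\in\mathbb{R}^n$, $y(\omega)$ denotes a chosen element of $\operatorname{argmin}_{y\in Y}\langle \omega,y\rangle$. Let $\ell:\mathbb{R}^n\to\mathbb{R}$ be differentiable and write $g(y)=\nabla \ell(y)$. Given $\omega\in\mathbb{R}^n$ and $\alpha>0$, define $\omega_0=\omega$ and $\omega_{k+1}=\omega_k+\alpha\, g(y(\omega_k))$ for $k\ge 0$. Tie-breaking convention: for every $k\ge1$, if $y(\omega_{k-1})$ is a minimizer of $\langle \omega_k,\cdot\rangle$ over $Y$, then $y(\omega_k)=y(\omega_{k-1})$. Define the linearized loss $f(y')=\ell(y(\omega))+\langle y'-y(\omega),\, g(y(\omega))\rangle$ for $y'\in Y$. *)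

(* Defs.v *)
From HB Require Import structures.
From mathcomp Require Import all_boot all_order all_algebra.
From mathcomp Require Import all_classical all_reals all_analysis.
Set Implicit Arguments. Unset Strict Implicit. Unset Printing Implicit Defensive.
Import Order.TTheory GRing.Theory Num.Theory.
Import numFieldNormedType.Exports.
Local Open Scope classical_set_scope.
Local Open Scope ring_scope.

Definition dotp (R : realType) (n : nat) (u v : 'rV[R]_n) : R :=
  \sum_(i < n) u 0 i * v 0 i.

Definition is_argmin (R : realType) (n : nat) (Y : set 'rV[R]_n)
  (w x : 'rV[R]_n) : Prop :=
  Y x /\ forall y', Y y' -> dotp w x <= dotp w y'.

Definition is_gradient (R : realType) (n : nat) (l : 'rV[R]_n -> R)
  (g : 'rV[R]_n -> 'rV[R]_n) : Prop :=
  forall y, differentiable l y /\ forall v, ('d l y) v = dotp v (g y).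

(* Main.v *)
Require Import Defs.
From HB Require Import structures.
From mathcomp Require Import all_boot all_order all_algebra.
From mathcomp Require Import all_classical all_reals all_analysis.
From mathcomp Require Import lra.
Import Order.TTheory GRing.Theory Num.Theory.
Import numFieldNormedType.Exports.
Local Open Scope classical_set_scope.
Local Open Scope ring_scope.

Lemma dotpDl (R : realType) (n : nat) (u v w : 'rV[R]_n) :
  dotp (u + v) w = dotp u w + dotp v w.
Proof. rewrite /dotp -big_split /=; apply: eq_bigr => i _; by rewrite mxE mulrDl. Qed.

Lemma dotpZl (R : realType) (n : nat) a (u w : 'rV[R]_n) :
  dotp (a *: u) w = a * dotp u w.
Proof. rewrite /dotp mulr_sumr; apply: eq_bigr => i _; by rewrite mxE mulrA. Qed.

Lemma dotpC (R : realType) (n : nat) (u w : 'rV[R]_n) : dotp u w = dotp w u.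
Proof. rewrite /dotp; apply: eq_bigr => i _; by rewrite mulrC. Qed.

Lemma dotpNl (R : realType) (n : nat) (u w : 'rV[R]_n) : dotp (- u) w = - dotp u w.
Proof. by rewrite -scaleN1r dotpZl mulN1r. Qed.

Theorem mainTheorem4 (R : realType) (d : nat)
  (Y : set 'rV[R]_d) (HYfin : finite_set Y) (HYne : Y !=set0)
  (y : 'rV[R]_d -> 'rV[R]_d)
  (Hy : forall w, is_argmin Y w (y w))
  (l : 'rV[R]_d -> R) (g : 'rV[R]_d -> 'rV[R]_d) (Hg : is_gradient l g)
  (omega : 'rV[R]_d) (alpha : R) (Halpha : 0 < alpha)
  (om : nat -> 'rV[R]_d)
  (Hom0 : om 0%N = omega)
  (HomS : forall k, om k.+1 = om k + alpha *: g (y (om k)))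
  (Htie : forall k, (1 <= k)%N ->
     is_argmin Y (om k) (y (om k.-1)) -> y (om k) = y (om k.-1))
  (n : nat)
  (Hbefore : forall k, (k < n)%N -> y (om k) = y omega)
  (Hn : y (om n) != y omega) :
  let f := fun y' : 'rV[R]_d => l (y omega) + dotp (y' - y omega) (g (y omega)) in
  f (y (om n)) < f (y omega).
Proof.
rewrite /= ltrD2l.
set y0 := y omega; set G := g y0; set yn := y (om n).
have Hk : forall k, (k <= n)%N -> om k = omega + (k%:R * alpha) *: G.
  elim=> [|k IH] Hkn; first by rewrite Hom0 mul0r scale0r addr0.
  rewrite HomS Hbefore // IH ?(ltnW Hkn) // -addrA -scalerDl; congr (_ + _ *: _).
  by rewrite -nat1r mulrDl mul1r addrC.
case: n Hbefore Hn Hk @yn => [|n'] Hbefore Hn Hk yn.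
  by move: Hn; rewrite Hom0 eqxx.
have Hnot : ~ is_argmin Y (om n'.+1) y0.
  move=> H; move: (Htie n'.+1 isT); rewrite /= Hbefore // => /(_ H) E.
  by move: Hn; rewrite E eqxx.
have [y' Yy' Hlt] : exists2 y', Y y' & dotp (om n'.+1) y' < dotp (om n'.+1) y0.
  apply: contra_notP Hnot => H; split; first by case: (Hy omega).
  move=> z Yz; rewrite leNgt; apply/negP => Hz; apply: H; by exists z.
have Hs : dotp (om n'.+1) yn < dotp (om n'.+1) y0.
  apply: le_lt_trans Hlt; by case: (Hy (om n'.+1)) => _ /(_ _ Yy').
have H0 : dotp omega y0 <= dotp omega yn.
  by case: (Hy omega) => _ /(_ yn (proj1 (Hy _))).
move: Hs; rewrite Hk // !dotpDl !dotpZl => Hs.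
have Hpos : 0 < n'.+1%:R * alpha by rewrite mulr_gt0 // ltr0n.
have : n'.+1%:R * alpha * dotp G yn < n'.+1%:R * alpha * dotp G y0 by lra.
rewrite ltr_pM2l // => HG.
by rewrite ltrD2r dotpC [dotp y0 G]dotpC.
Qed.
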